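(* The map $F:K\times\mathbf S^k_{++}\to\mathbb{R}\cup\{\infty\}$ is continuous (with $\mathbb{R}\cup\{\infty\}$ carrying its order topology).
   Context: $\mathbf S^k_{++}$ is the set of $k\times k$ symmetric positive-definite matrices. $\mathcal I$ is a collection of nonempty subsets of $\{1,\dots,k\}$, $a\in\mathbb{R}^k\setminus\{0\}$. $P_I:\mathbb{R}^k\to\mathbb{R}^{|I|}$ is the coordinate projection onto $I$, and for $A\in\mathbf S^k_{++}$, $A_I^\dagger:=P_I^\top(P_IAP_I^\top)^{-1}P_I$. Costs $c_I\in\mathbb{R}^m_{\ge0}$ and $B_0\in\mathbb{R}^m_{>0}$; vector inequalities componentwise. $K=\{\underline\nu\in\mathbb{R}^{\mathcal I}:\underline\nu\ge0,\ \sum_I\nu_Ic_I\le B_0\}$. $F(\underline\nu,A)=a^\top(\sum_I\nu_IA_I^\dagger)^\dagger a$ if $a\in\operatorname{range}(\sum_I\nu_IA_I^\dagger)$ and $F(\underline\nu,A)=\infty$ otherwise; $\dagger$ denotes the Moore–Penrose pseudo-inverse. *)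

(* Defs.v *)
From HB Require Import structures.
From mathcomp Require Import all_boot all_order all_algebra.
From mathcomp Require Import all_classical all_reals all_analysis.
Set Implicit Arguments. Unset Strict Implicit. Unset Printing Implicit Defensive.
Import Order.TTheory GRing.Theory Num.Theory.
Import numFieldNormedType.Exports.
Local Open Scope ring_scope.
Local Open Scope classical_set_scope.

Section Defs.
Variable R : realType.

(* Penrose conditions (real matrices: conjugate transpose = transpose). *)
Definition penrose {p q} (M : 'M[R]_(p, q)) (X : 'M[R]_(q, p)) : Prop :=
  [/\ M *m X *m M = M, X *m M *m X = X,
      (M *m X)^T = M *m X & (X *m M)^T = X *m M].

(* Moore--Penrose pseudo-inverse: the (unique) matrix satisfying the
   Penrose conditions (xget picks it; it always exists). *)
Definition mp_pinv {p q} (M : 'M[R]_(p, q)) : 'M[R]_(q, p) :=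
  xget 0 (penrose M).

Definition coordproj {k} (I : {set 'I_k}) : 'M[R]_(#|I|, k) :=
  \matrix_(r < #|I|, j < k) ((@enum_val _ (mem I) r == j)%:R).

Definition Adag {k} (I : {set 'I_k}) (A : 'M[R]_k) : 'M[R]_k :=
  (coordproj I)^T *m invmx (coordproj I *m A *m (coordproj I)^T) *m coordproj I.

(* the collection \mathcal I is enumerated injectively by Is : 'I_n -> {set 'I_k} *)
Definition Msum {k n} (Is : 'I_n -> {set 'I_k}) (nu : 'rV[R]_n) (A : 'M[R]_k)
  : 'M[R]_k := \sum_(i < n) nu 0 i *: Adag (Is i) A.

Definition in_range {p q} (M : 'M[R]_(p, q)) (a : 'cV[R]_p) : Prop :=
  exists x : 'cV[R]_q, M *m x = a.

Definition Ffun {k n} (Is : 'I_n -> {set 'I_k}) (a : 'cV[R]_k)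
  (nu : 'rV[R]_n) (A : 'M[R]_k) : \bar R :=
  if asbool (in_range (Msum Is nu A) a)
  then ((a^T *m mp_pinv (Msum Is nu A) *m a) 0 0)%:E
  else +oo%E.

Definition Kset {m n} (c : 'I_n -> 'cV[R]_m) (B0 : 'cV[R]_m) : set 'rV[R]_n :=
  [set nu | (forall i, 0 <= nu 0 i) /\
            (forall j, \sum_(i < n) nu 0 i * c i j 0 <= B0 j 0)].

Definition Spd (k : nat) : set 'M[R]_k :=
  [set A | A^T = A /\ forall x : 'cV[R]_k, x != 0 -> 0 < (x^T *m A *m x) 0 0].

End Defs.

(* Main.v *)
Require Import Defs.
From HB Require Import structures.
From mathcomp Require Import all_boot all_order all_algebra.
From mathcomp Require Import all_classical all_reals all_analysis.
From mathcomp Require Import ring lra.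
Import Order.TTheory GRing.Theory Num.Theory.
Import numFieldNormedType.Exports.
Set Implicit Arguments. Unset Strict Implicit. Unset Printing Implicit Defensive.
Local Open Scope ring_scope.
Local Open Scope classical_set_scope.

Section LinAlg.
Variable R : realType.

Lemma sqr_eq0 n (v : 'rV[R]_n) : (v *m v^T) 0 0 = 0 -> v = 0.
Proof.
rewrite mxE; under eq_bigr do rewrite mxE.
move/eqP; rewrite psumr_eq0; last by move=> i _; rewrite -expr2 sqr_ge0.
move/allP => H; apply/matrixP => i j; rewrite (ord1 i) !mxE.
have /H : j \in index_enum 'I_n by rewrite mem_index_enum.
by rewrite /= mulf_eq0 orbb => /eqP.
Qed.

Lemma gram_unit r n (F : 'M[R]_(r, n)) : row_free F -> F *m F^T \in unitmx.
Proof.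
move=> fF; rewrite -row_free_unit; apply: inj_row_free => v H.
have : (v *m F) *m (v *m F)^T = 0.
  by rewrite trmx_mul mulmxA -(mulmxA v) H mul0mx.
move=> /(congr1 (fun M : 'M[R]_1 => M 0 0)); rewrite [RHS]mxE => /sqr_eq0 vF0.
apply: (row_free_inj fF); by rewrite vF0 mul0mx.
Qed.

Lemma mp_exists p q (M : 'M[R]_(p, q)) : exists X, penrose M X.
Proof.
have [r [C [F [eM [fF fC]]]]] : exists r (C : 'M[R]_(p, r)) (F : 'M[R]_(r, q)),
    M = C *m F /\ row_free F /\ row_free C^T.
  exists (\rank M), (col_base M), (row_base M); split; first by rewrite mulmx_base.
  split; first exact: row_base_free.
  by rewrite /row_free mxrank_tr; have := col_base_full M; rewrite /row_full.
subst M.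
have uF := @gram_unit _ _ F fF.
have uC := @gram_unit _ _ C^T fC; rewrite trmxK in uC.
set GF := invmx (F *m F^T); set GC := invmx (C^T *m C).
have sGF : GF^T = GF by rewrite /GF trmx_inv trmx_mul trmxK.
have sGC : GC^T = GC by rewrite /GC trmx_inv trmx_mul trmxK.
have kF : F *m F^T *m GF = 1%:M by rewrite /GF mulmxV.
have kC : GC *m (C^T *m C) = 1%:M by rewrite /GC mulVmx.
have kF' : forall s (X : 'M[R]_(s, r)), X *m F *m F^T *m GF = X.
  by move=> s X; rewrite -!mulmxA (mulmxA F) kF mulmx1.
have kC' : forall s (X : 'M[R]_(s, r)), X *m GC *m C^T *m C = X.
  by move=> s X; rewrite -!mulmxA kC mulmx1.
exists (F^T *m GF *m GC *m C^T).
have e1 : (C *m F) *m (F^T *m GF *m GC *m C^T) = C *m GC *m C^T.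
  by rewrite !mulmxA kF'.
have e2 : (F^T *m GF *m GC *m C^T) *m (C *m F) = F^T *m GF *m F.
  by rewrite !mulmxA kC'.
split.
- by rewrite e1 !mulmxA kC'.
- by rewrite e2 !mulmxA kF'.
- by rewrite e1 !trmx_mul trmxK sGC mulmxA.
- by rewrite e2 !trmx_mul trmxK sGF mulmxA.
Qed.

Lemma mp_penrose p q (M : 'M[R]_(p, q)) : penrose M (mp_pinv M).
Proof. by rewrite /mp_pinv; case: (@mp_exists p q M) => X HX; apply: (xgetPex 0 (ex_intro _ X HX)). Qed.

End LinAlg.
Section Bil.
Variable R : realType.
Lemma tr11 (N : 'M[R]_1) : N 0 0 = N^T 0 0.
Proof. by rewrite mxE. Qed.
Definition bil {k} (M : 'M[R]_k) (x y : 'cV[R]_k) : R := (x^T *m M *m y) 0 0.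
Definition dot {k} (x y : 'cV[R]_k) : R := (x^T *m y) 0 0.

Lemma bilDl k (M : 'M[R]_k) x y z : bil M (x + y) z = bil M x z + bil M y z.
Proof. by rewrite /bil linearD /= !mulmxDl mxE. Qed.
Lemma bilDr k (M : 'M[R]_k) x y z : bil M z (x + y) = bil M z x + bil M z y.
Proof. by rewrite /bil !mulmxDr mxE. Qed.
Lemma bilNl k (M : 'M[R]_k) x z : bil M (- x) z = - bil M x z.
Proof. by rewrite /bil linearN /= !mulNmx mxE. Qed.
Lemma bilNr k (M : 'M[R]_k) x z : bil M z (- x) = - bil M z x.
Proof. by rewrite /bil !mulmxN mxE. Qed.
Lemma bilZl k (M : 'M[R]_k) c x z : bil M (c *: x) z = c * bil M x z.
Proof. by rewrite /bil linearZ /= -!scalemxAl mxE. Qed.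
Lemma bilZr k (M : 'M[R]_k) c x z : bil M z (c *: x) = c * bil M z x.
Proof. by rewrite /bil -!scalemxAr mxE. Qed.
Lemma bil_sym k (M : 'M[R]_k) x y : M^T = M -> bil M x y = bil M y x.
Proof.
move=> sM; by rewrite /bil tr11 !trmx_mul trmxK sM mulmxA.
Qed.
Lemma dot_sym k (x y : 'cV[R]_k) : dot x y = dot y x.
Proof. by rewrite /dot tr11 trmx_mul trmxK. Qed.
Lemma dotDl k (x y z : 'cV[R]_k) : dot (x + y) z = dot x z + dot y z.
Proof. by rewrite /dot linearD /= mulmxDl mxE. Qed.
Lemma dotZr k (x z : 'cV[R]_k) c : dot z (c *: x) = c * dot z x.
Proof. by rewrite /dot -scalemxAr mxE. Qed.
Lemma dotZl k (x z : 'cV[R]_k) c : dot (c *: x) z = c * dot x z.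
Proof. by rewrite /dot linearZ /= -scalemxAl mxE. Qed.
Lemma dot_sum k I (r : seq I) P (f : I -> 'cV[R]_k) x :
  dot (\sum_(i <- r | P i) f i) x = \sum_(i <- r | P i) dot (f i) x.
Proof.
by rewrite /dot raddf_sum mulmx_suml summxE.
Qed.
Lemma bil_sumM k I (r : seq I) P (f : I -> 'M[R]_k) x y :
  bil (\sum_(i <- r | P i) f i) x y = \sum_(i <- r | P i) bil (f i) x y.
Proof. by rewrite /bil mulmx_sumr mulmx_suml summxE. Qed.
Lemma bilZM k (M : 'M[R]_k) c x y : bil (c *: M) x y = c * bil M x y.
Proof. by rewrite /bil -scalemxAr -scalemxAl mxE. Qed.

Lemma bil_mul k l (P : 'M[R]_(l, k)) (G : 'M[R]_l) x y :
  bil (P^T *m G *m P) x y = bil G (P *m x) (P *m y).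
Proof. by rewrite /bil trmx_mul !mulmxA. Qed.
Lemma dot_mul k l (P : 'M[R]_(l, k)) w x : dot (P^T *m w) x = dot w (P *m x).
Proof. by rewrite /dot trmx_mul trmxK mulmxA. Qed.

Lemma term_ineq l (H G : 'M[R]_l) (nu : R) (w u : 'cV[R]_l) :
  H^T = H -> G^T = G -> H *m G = 1%:M -> (forall v, 0 <= bil H v v) ->
  0 <= nu -> (0 < nu \/ w = 0) ->
  2 * dot w u - nu * bil G u u <= bil H w w / nu.
Proof.
move=> sH sG HG psH nu0 hnu.
have GH : G *m H = 1%:M.
  by apply: (can_inj trmxK); rewrite trmx_mul sG sH trmx1.
have e1 : bil H (G *m u) (G *m u) = bil G u u.
  by rewrite /bil trmx_mul sG !mulmxA -(mulmxA _ G H) GH mulmx1.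
case: hnu => [nup|->]; last first.
  rewrite /dot /bil !linear0 /= !mul0mx mxE mulr0 mul0r add0r oppr_le0.
  by rewrite mulr_ge0 //; move: (psH (G *m u)); rewrite e1.
have e2 : bil H w (G *m u) = dot w u.
  by rewrite /bil /dot mulmxA -(mulmxA _ H G) HG mulmx1.
have := psH (nu *: (G *m u) - w).
rewrite bilDl !bilDr !bilNl !bilNr !bilZl !bilZr opprK e1.
rewrite (@bil_sym _ _ (G *m u) w sH) e2 => h.
rewrite -subr_ge0.
have -> : bil H w w / nu - (2 * dot w u - nu * bil G u u) =
  (nu * (nu * bil G u u) - nu * dot w u - nu * dot w u + bil H w w) / nu.
  by field; rewrite gt_eqF.
apply: divr_ge0; last exact: ltW.
move: h; set X := bil H _ _; lra.
Qed.

End Bil.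

Section Struct.
Variable R : realType.
Variables (k n : nat) (Is : 'I_n -> {set 'I_k}).

Definition Hm (I : {set 'I_k}) (A : 'M[R]_k) := coordproj R I *m A *m (coordproj R I)^T.
Definition Gm I (A : 'M[R]_k) := invmx (Hm I A).

Lemma PPt (I : {set 'I_k}) : coordproj R I *m (coordproj R I)^T = 1%:M.
Proof.
apply/matrixP => r s; rewrite !mxE.
under eq_bigr do rewrite !mxE.
rewrite (bigD1 (enum_val r)) //= big1; last first.
  by move=> j /negbTE hj; rewrite eq_sym hj mul0r.
by rewrite eqxx mul1r addr0 (inj_eq (@enum_val_inj _ (mem I))) eq_sym.
Qed.

Lemma Hm_sym I A : A^T = A -> (Hm I A)^T = Hm I A.
Proof. by move=> sA; rewrite /Hm !trmx_mul trmxK sA mulmxA. Qed.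

Lemma Hm_pd I A : @Spd R k A -> forall v, v != 0 -> 0 < bil (Hm I A) v v.
Proof.
move=> [sA pA] v nv; rewrite /Hm -{1}(trmxK (coordproj R I)) bil_mul.
apply: pA; apply: contra nv => /eqP h.
by rewrite -(mul1mx v) -(PPt I) -mulmxA h mulmx0.
Qed.

Lemma Hm_psd I A : @Spd R k A -> forall v, 0 <= bil (Hm I A) v v.
Proof.
move=> hA v; have [->|nv] := eqVneq v 0; last by apply: ltW; apply: Hm_pd.
by rewrite /bil mulmx0 mxE.
Qed.

Lemma Hm_unit I A : @Spd R k A -> Hm I A \in unitmx.
Proof.
move=> hA; rewrite -row_free_unit; apply: inj_row_free => v H.
have : bil (Hm I A) v^T v^T = 0 by rewrite /bil trmxK H mul0mx mxE.
move=> h; apply/eqP; rewrite -(inj_eq (can_inj (@trmxK _ _ _))) linear0.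
apply/negPn/negP => /(Hm_pd (I:=I) hA); by rewrite h ltxx.
Qed.

Lemma Gm_sym I A : @Spd R k A -> (Gm I A)^T = Gm I A.
Proof. by move=> [sA pA]; rewrite /Gm trmx_inv Hm_sym. Qed.

Lemma HG I A : @Spd R k A -> Hm I A *m Gm I A = 1%:M.
Proof. by move=> hA; rewrite /Gm mulmxV // Hm_unit. Qed.

Lemma GH I A : @Spd R k A -> Gm I A *m Hm I A = 1%:M.
Proof. by move=> hA; rewrite /Gm mulVmx // Hm_unit. Qed.

Lemma Gm_psd I A : @Spd R k A -> forall u, 0 <= bil (Gm I A) u u.
Proof.
move=> hA u; have := Hm_psd (I:=I) hA (Gm I A *m u).
rewrite /bil trmx_mul Gm_sym //; have e := GH I hA; set G := Gm I A in e *; set H := Hm I A in e *.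
by rewrite -[u^T *m G *m H]mulmxA e mulmx1 mulmxA.
Qed.

Lemma Adag_sym I A : @Spd R k A -> (Adag I A)^T = Adag I A.
Proof. by move=> hA; rewrite /Adag !trmx_mul trmxK Gm_sym // mulmxA. Qed.

Lemma Adag_psd I A : @Spd R k A -> forall x, 0 <= bil (Adag I A) x x.
Proof. by move=> hA x; rewrite /Adag bil_mul; apply: Gm_psd. Qed.

Lemma Msum_sym (nu : 'rV[R]_n) A : @Spd R k A -> (Msum Is nu A)^T = Msum Is nu A.
Proof.
move=> hA; rewrite /Msum raddf_sum; apply: eq_bigr => i _.
have h := Adag_sym (Is i) hA; apply/matrixP => r s; by rewrite -{2}h !mxE.
Qed.

Lemma Msum_psd (nu : 'rV[R]_n) A : @Spd R k A -> (forall i, 0 <= nu 0 i) ->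
  forall x, 0 <= bil (Msum Is nu A) x x.
Proof.
move=> hA hnu x; rewrite /Msum bil_sumM; apply: sumr_ge0 => i _.
by rewrite bilZM mulr_ge0 // Adag_psd.
Qed.

Lemma sum_ineq (a : 'cV[R]_k) (nu : 'rV[R]_n) A (w : forall i, 'cV[R]_#|Is i|) x :
  @Spd R k A -> (forall i, 0 <= nu 0 i) -> (forall i, 0 < nu 0 i \/ w i = 0) ->
  a = \sum_i (coordproj R (Is i))^T *m w i ->
  2 * dot a x - bil (Msum Is nu A) x x <=
    \sum_i bil (Hm (Is i) A) (w i) (w i) / nu 0 i.
Proof.
move=> hA hnu hw ->; rewrite dot_sum /Msum bil_sumM mulr_sumr -sumrB.
apply: ler_sum => i _; rewrite dot_mul bilZM /Adag bil_mul.
apply: term_ineq => //; first by apply: Hm_sym; case: hA.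
- exact: Gm_sym.
- exact: HG.
- exact: Hm_psd.
Qed.

End Struct.

Section Low.
Variable R : realType.

Lemma low_ineq k (M : 'M[R]_k) y x : M^T = M -> (forall v, 0 <= bil M v v) ->
  2 * dot (M *m y) x - bil M x x <= bil M y y.
Proof.
move=> sM pM; have := pM (x - y).
rewrite bilDl !bilDr !bilNl !bilNr opprK (@bil_sym _ _ M y x sM).
have -> : dot (M *m y) x = bil M y x by rewrite /dot /bil trmx_mul sM.
rewrite (@bil_sym _ _ M y x sM) => h; lra.
Qed.

Lemma mp_val k (M : 'M[R]_k) y : M^T = M ->
  ((M *m y)^T *m mp_pinv M *m (M *m y)) 0 0 = bil M y y.
Proof.
move=> sM; have [h1 _ _ _] := mp_penrose M.
by rewrite /bil trmx_mul sM !mulmxA -(mulmxA _ M (mp_pinv M)) -(mulmxA _ (M *m _)) h1.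
Qed.

Lemma ker_vec k (M : 'M[R]_k) (a : 'cV[R]_k) : M^T = M -> ~ in_range M a ->
  exists z, M *m z = 0 /\ dot a z != 0.
Proof.
move=> sM nr.
have nsub : ~~ (a^T <= M^T)%MS.
  apply/negP => /submxP [D hD]; apply: nr; exists D^T.
  by rewrite -(trmxK a) hD trmx_mul trmxK.
rewrite submxE in nsub; set K := cokermx M^T in nsub.
exists (K *m (a^T *m K)^T); split.
  by rewrite mulmxA -{1}sM mulmx_coker mul0mx.
rewrite /dot mulmxA; apply/eqP => /sqr_eq0 /eqP; exact/negP.
Qed.
End Low.

Section Cont.
Variable R : realType.
Variables (T : topologicalType) (p0 : T).

Definition rc (g : T -> R) := g x @[x --> p0] --> g p0.
Definition mc a b (g : T -> 'M[R]_(a, b)) := forall i j, rc (fun x => g x i j).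

Lemma rc_cst c : rc (fun _ => c).
Proof. exact: cvg_cst. Qed.
Lemma rc_add g h : rc g -> rc h -> rc (fun x => g x + h x).
Proof. by move=> cg ch; apply: cvgD. Qed.
Lemma rc_mul g h : rc g -> rc h -> rc (fun x => g x * h x).
Proof. by move=> cg ch; apply: cvgM. Qed.
Lemma rc_opp g : rc g -> rc (fun x => - g x).
Proof. by move=> cg; apply: cvgN. Qed.
Lemma rc_inv g : g p0 != 0 -> rc g -> rc (fun x => (g x)^-1).
Proof. by move=> g0 cg; apply: cvgV. Qed.
Lemma rc_sum I (r : seq I) (P : pred I) (g : I -> T -> R) :
  (forall i, rc (g i)) -> rc (fun x => \sum_(i <- r | P i) g i x).
Proof.
move=> cg; apply: (@cvg_big _ _ +%R 0 P (@add_continuous R)) => // i _; exact: cg.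
Qed.
Lemma rc_prod I (r : seq I) (P : pred I) (g : I -> T -> R) :
  (forall i, rc (g i)) -> rc (fun x => \prod_(i <- r | P i) g i x).
Proof.
move=> cg; elim: r => [|x r IH].
  rewrite /rc; under eq_fun do rewrite big_nil; rewrite big_nil; exact: rc_cst.
rewrite /rc; under eq_fun do rewrite big_cons; rewrite big_cons.
case: (P x); last exact: IH.
exact: rc_mul (cg x) IH.
Qed.

Lemma mc_cst a b (M : 'M[R]_(a, b)) : mc (fun _ => M).
Proof. by move=> i j; apply: rc_cst. Qed.
Lemma mc_add a b (g h : T -> 'M[R]_(a, b)) : mc g -> mc h -> mc (fun x => g x + h x).
Proof.
move=> cg ch i j; rewrite /rc; under eq_fun do rewrite mxE.
by rewrite mxE; apply: rc_add.
Qed.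
Lemma mc_mul a b c (g : T -> 'M[R]_(a, b)) (h : T -> 'M[R]_(b, c)) :
  mc g -> mc h -> mc (fun x => g x *m h x).
Proof.
move=> cg ch i j; rewrite /rc; under eq_fun do rewrite mxE.
rewrite mxE; apply: rc_sum => l; exact: rc_mul.
Qed.
Lemma mc_scale a b (s : T -> R) (g : T -> 'M[R]_(a, b)) :
  rc s -> mc g -> mc (fun x => s x *: g x).
Proof.
move=> cs cg i j; rewrite /rc; under eq_fun do rewrite mxE.
by rewrite mxE; apply: rc_mul.
Qed.
Lemma mc_tr a b (g : T -> 'M[R]_(a, b)) : mc g -> mc (fun x => (g x)^T).
Proof.
move=> cg i j; rewrite /rc; under eq_fun do rewrite mxE.
by rewrite mxE; apply: cg.
Qed.
Lemma mc_sum a b I (r : seq I) (P : pred I) (g : I -> T -> 'M[R]_(a, b)) :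
  (forall l, mc (g l)) -> mc (fun x => \sum_(l <- r | P l) g l x).
Proof.
move=> cg i j; rewrite /rc; under eq_fun do rewrite summxE.
rewrite summxE; apply: rc_sum => l; exact: cg.
Qed.
Lemma rc_det a (g : T -> 'M[R]_a) : mc g -> rc (fun x => \det (g x)).
Proof.
move=> cg; rewrite /rc /determinant; apply: rc_sum => s.
apply: rc_mul; first exact: rc_cst.
apply: rc_prod => i; exact: cg.
Qed.
Lemma mc_rowcol a (g : T -> 'M[R]_a.+1) i j : mc g -> mc (fun x => row' i (col' j (g x))).
Proof.
move=> cg r s; rewrite /rc; under eq_fun do rewrite !mxE.
by rewrite !mxE; apply: cg.
Qed.
Lemma mc_adj a (g : T -> 'M[R]_a) : mc g -> mc (fun x => \adj (g x)).
Proof.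
case: a g => [|a] g cg i j; first by case: i.
rewrite /rc; under eq_fun do rewrite mxE /cofactor.
rewrite mxE /cofactor; apply: rc_mul; first exact: rc_cst.
by apply: rc_det; apply: mc_rowcol.
Qed.
Lemma mc_inv a (g : T -> 'M[R]_a) : g p0 \in unitmx -> mc g -> mc (fun x => invmx (g x)).
Proof.
move=> u0 cg.
have d0 : \det (g p0) != 0 by rewrite -unitfE -unitmxE.
have nd : \forall x \near p0, \det (g x) != 0 by exact: (@cvgr_neq0 _ _ _ _ _ _ _ (rc_det cg) d0).
have e : \forall x \near p0, invmx (g x) = (\det (g x))^-1 *: \adj (g x).
  by near=> x; rewrite /invmx unitmxE unitfE (near nd x).
move=> i j; rewrite /rc.
apply: (cvg_trans (near_eq_cvg _)).
  by near=> x; rewrite (near e x).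
rewrite /invmx u0.
by apply: mc_scale; [apply: rc_inv => //; exact: rc_det | exact: mc_adj].
Unshelve. all: by end_near.
Qed.
End Cont.

Section Main.
Variable R : realType.
Variables (k n : nat) (Is : 'I_n -> {set 'I_k}).
Local Notation T := ('rV[R]_n * 'M[R]_k)%type.

Lemma mc_fst (p0 : T) : mc p0 (fun p : T => p.1).
Proof.
move=> i j; rewrite /rc.
apply: (@cvg_comp _ _ _ fst (fun M : 'rV[R]_n => M i j) _ (nbhs p0.1)).
  exact: cvg_fst.
exact: coord_continuous.
Qed.

Lemma mc_snd (p0 : T) : mc p0 (fun p : T => p.2).
Proof.
move=> i j; rewrite /rc.
apply: (@cvg_comp _ _ _ snd (fun M : 'M[R]_k => M i j) _ (nbhs p0.2)).
  exact: cvg_snd.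
exact: coord_continuous.
Qed.

Lemma mc_Hm (p0 : T) I : mc p0 (fun p : T => Hm I p.2).
Proof. by rewrite /Hm; apply: mc_mul; [apply: mc_mul; [apply: mc_cst|apply: mc_snd]|apply: mc_cst]. Qed.

Lemma mc_Adag (p0 : T) I : Spd p0.2 -> mc p0 (fun p : T => Adag I p.2).
Proof.
move=> hA; rewrite /Adag; apply: mc_mul; last exact: mc_cst.
apply: mc_mul; first exact: mc_cst.
apply: mc_inv; first exact: Hm_unit.
exact: mc_Hm.
Qed.

Lemma mc_Msum (p0 : T) : Spd p0.2 -> mc p0 (fun p : T => Msum Is p.1 p.2).
Proof.
move=> hA; rewrite /Msum; apply: mc_sum => i.
apply: mc_scale; last exact: mc_Adag.
exact: mc_fst.
Qed.

Lemma rc_bil (p0 : T) l (g : T -> 'M[R]_l) x y : mc p0 g -> rc p0 (fun p => bil (g p) x y).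
Proof.
move=> cg; have h : mc p0 (fun p => x^T *m g p *m y).
  by apply: mc_mul; [apply: mc_mul; [apply: mc_cst|exact: cg]|apply: mc_cst].
exact: h 0 0.
Qed.


Lemma f_ge_L (a : 'cV[R]_k) (nu : 'rV[R]_n) A x :
  (forall i, 0 <= nu 0 i) -> Spd A ->
  ((2 * dot a x - bil (Msum Is nu A) x x)%:E <= Ffun Is a nu A)%E.
Proof.
move=> hnu hA; rewrite /Ffun; case: asboolP => [[y hy]|_]; last exact: leey.
rewrite -hy mp_val ?Msum_sym // lee_fin.
apply: low_ineq; first exact: Msum_sym.
exact: Msum_psd.
Qed.

Lemma bilHG (I : {set 'I_k}) (A : 'M[R]_k) v : Spd A ->
  bil (Hm I A) (Gm I A *m v) (Gm I A *m v) = bil (Gm I A) v v.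
Proof.
move=> hA; rewrite /bil trmx_mul Gm_sym //; have e := GH I hA.
set G := Gm I A in e *; set H := Hm I A in e *.
by rewrite -[v^T *m G *m H]mulmxA e mulmx1 mulmxA.
Qed.

Lemma f_le_U (a : 'cV[R]_k) (nu : 'rV[R]_n) A (w : forall i, 'cV[R]_#|Is i|) :
  (forall i, 0 <= nu 0 i) -> Spd A -> (forall i, 0 < nu 0 i \/ w i = 0) ->
  a = \sum_i (coordproj R (Is i))^T *m w i ->
  exists y, Msum Is nu A *m y = a /\
    Ffun Is a nu A = (bil (Msum Is nu A) y y)%:E /\
    bil (Msum Is nu A) y y <= \sum_i bil (Hm (Is i) A) (w i) (w i) / nu 0 i.
Proof.
move=> hnu hA hw ha.
set M := Msum Is nu A; set U := \sum_i _.
have sM : M^T = M by apply: Msum_sym.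
have key x : 2 * dot a x - bil M x x <= U by apply: sum_ineq.
have [[y hy]|nr] := asboolP (in_range M a); last first.
  exfalso; have [z [Mz dz]] := ker_vec sM nr.
  have := key (((U + 1) / (2 * dot a z)) *: z).
  rewrite dotZr bilZl bilZr.
  have -> : bil M z z = 0 by rewrite /bil -mulmxA Mz mulmx0 mxE.
  have -> : 2 * ((U + 1) / (2 * dot a z) * dot a z) = U + 1.
    by field.
  by rewrite !mulr0 subr0 gerDl ler10.
exists y; split => //; split.
  by rewrite /Ffun asboolT; [rewrite -hy mp_val | exists y].
have := key y; rewrite -hy.
have -> : dot (M *m y) y = bil M y y by rewrite /dot /bil trmx_mul sM.
move=> h; lra.
Qed.



Lemma main_at (a : 'cV[R]_k) (S : set ('rV[R]_n * 'M[R]_k)) (nu0 : 'rV[R]_n) (A0 : 'M[R]_k) :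
  (forall p, S p -> (forall i, 0 <= p.1 0 i) /\ Spd p.2) ->
  (forall i, 0 <= nu0 0 i) -> Spd A0 ->
  (fun p : 'rV[R]_n * 'M[R]_k => Ffun Is a p.1 p.2) @ within S (nbhs (nu0, A0)) -->
    Ffun Is a nu0 A0.
Proof.
move=> hSg hnu0 hA0.
set p0 := (nu0, A0).
set f := fun p : 'rV[R]_n * 'M[R]_k => Ffun Is a p.1 p.2.
have hS : \forall p \near within S (nbhs p0), (forall i : 'I_n, 0 <= (p.1 : 'rV[R]_n) 0 i) /\ Spd (p.2 : 'M[R]_k).
  by apply: filterS (withinT S (nbhs_filter p0)) => p /hSg.
have sM0 : (Msum Is nu0 A0)^T = Msum Is nu0 A0 by apply: Msum_sym.
have [[y0 hy0]|nr] := asboolP (in_range (Msum Is nu0 A0) a).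
-
  set w := fun i => nu0 0 i *: (Gm (Is i) A0 *m (coordproj R (Is i) *m y0)).
  have ha : a = \sum_i (coordproj R (Is i))^T *m w i.
    rewrite -hy0 /Msum mulmx_suml; apply: eq_bigr => i _.
    by rewrite /w /Adag -scalemxAl -scalemxAr !mulmxA.
  have hw0 : forall i, 0 < nu0 0 i \/ w i = 0.
    move=> i; have := hnu0 i; rewrite le_eqVlt => /orP [/eqP e|]; last by left.
    by right; rewrite /w -e scale0r.
  set U := fun p : 'rV[R]_n * 'M[R]_k =>
    \sum_i bil (Hm (Is i) p.2) (w i) (w i) / p.1 0 i.
  set L := fun p : 'rV[R]_n * 'M[R]_k => 2 * dot a y0 - bil (Msum Is p.1 p.2) y0 y0.
  set F0 := bil (Msum Is nu0 A0) y0 y0.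
  have f0 : Ffun Is a nu0 A0 = F0%:E.
    by rewrite /Ffun asboolT; [rewrite -hy0 mp_val | exists y0].
  have cL : rc p0 L.
    apply: rc_add; first exact: rc_cst.
    apply: rc_opp; apply: rc_bil; exact: mc_Msum.
  have cU : rc p0 U.
    apply: rc_sum => i; case: (hw0 i) => [pos|w0].
      apply: rc_mul; first by apply: rc_bil; exact: mc_Hm.
      by apply: rc_inv; [rewrite /= gt_eqF | exact: mc_fst].
    suff -> : (fun p : 'rV[R]_n * 'M[R]_k => bil (Hm (Is i) p.2) (w i) (w i) / p.1 0 i)
        = fun _ => 0 by exact: rc_cst.
    by apply: funext => p; rewrite w0 /bil mulmx0 mxE mul0r.
  have L0 : L p0 = F0.
    rewrite /L /= -{1}hy0.
    have -> : dot (Msum Is nu0 A0 *m y0) y0 = F0 by rewrite /dot /bil trmx_mul sM0.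
    by rewrite /F0; ring.
  have U0 : U p0 = F0.
    rewrite /U /F0 /= /Msum bil_sumM; apply: eq_bigr => i _.
    rewrite bilZM /w bilZl bilZr bilHG // /Adag bil_mul.
    have [->|nz] := eqVneq (nu0 0 i) 0; first by rewrite !mul0r.
    by rewrite mulrAC mulfV // mul1r.
  have key : \forall p \near within S (nbhs p0),
      exists r, Ffun Is a p.1 p.2 = r%:E /\ L p <= r <= U p.
    near=> p.
    have [hnu hA] : (forall i, 0 <= p.1 0 i) /\ Spd p.2 by near: p.
    have hp : forall i, 0 < nu0 0 i -> 0 < p.1 0 i.
      near: p; apply: filter_forall => i.
      apply: (@cvg_within _ (nbhs p0) _ S).
      have [pos|_] := ltP 0 (nu0 0 i); last by rewrite nbhs_filterE; apply: filterE.
      have cf : rc p0 (fun q : 'rV[R]_n * 'M[R]_k => q.1 0 i) by apply: mc_fst.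
      have h := @cvgr_gt _ _ _ _ _ _ cf 0 pos; move: h => /(_ (nbhs_filter p0)) h.
      rewrite nbhs_filterE in h *; move: h; apply: (@filterS _ _ (nbhs_filter p0)) => q hq _; exact: hq.
    have hw : forall i, 0 < p.1 0 i \/ w i = 0.
      by move=> i; case: (hw0 i) => [/hp|]; [left|right].
    have [y [hy [hF hU]]] := f_le_U hnu hA hw ha.
    exists (bil (Msum Is p.1 p.2) y y); split => //; rewrite hU andbT.
    rewrite /L -hy; apply: low_ineq; [exact: Msum_sym | exact: Msum_psd].
  rewrite f0; apply/fine_cvgP; split.
    by apply: filterS key => p [r [h _]]; rewrite /f h.
  apply: (@squeeze_cvgr _ _ _ _ L U).
  - by apply: filterS key => p [r [h hr]]; rewrite /f /= h.
  - by rewrite -L0; apply: cvg_within_filter.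
  - by rewrite -U0; apply: cvg_within_filter.
-
  have [z [Mz dz]] := ker_vec sM0 nr.
  have f0 : Ffun Is a nu0 A0 = +oo%E by rewrite /Ffun /= asboolF.
  rewrite f0; apply/cvgeyPgt => B.
  set t := (B + 1) / (2 * dot a z).
  set L := fun p : 'rV[R]_n * 'M[R]_k => 2 * dot a (t *: z) - bil (Msum Is p.1 p.2) (t *: z) (t *: z).
  have cL : rc p0 L.
    apply: rc_add; first exact: rc_cst.
    apply: rc_opp; apply: rc_bil; exact: mc_Msum.
  have L0 : L p0 = B + 1.
    rewrite /L /= dotZr !bilZl !bilZr.
    have -> : bil (Msum Is nu0 A0) z z = 0 by rewrite /bil -mulmxA Mz mulmx0 mxE.
    rewrite !mulr0 subr0 /t; field; exact: dz.
  have nL : \forall p \near p0, B < L p.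
    by apply: (@cvgr_gt _ _ _ _ L (L p0) cL); rewrite L0 ltrDl.
  have nL' : \forall p \near within S (nbhs p0), B < L p.
    exact: (@cvg_within _ (nbhs p0) _ S) _ nL.
  near=> p.
  have [hnu hA] : (forall i, 0 <= p.1 0 i) /\ Spd p.2 by near: p.
  apply: (lt_le_trans _ (f_ge_L _ (t *: z) hnu hA)).
  rewrite lte_fin; near: p.
  exact: nL'.
Unshelve. all: by end_near. Qed.

End Main.

Unset Implicit Arguments. Set Strict Implicit.

Theorem lemmaE6 (R : realType) (k m n : nat)
  (Is : 'I_n -> {set 'I_k}) (c : 'I_n -> 'cV[R]_m) (B0 : 'cV[R]_m)
  (a : 'cV[R]_k) :
  injective Is ->
  (forall i, Is i != finset.set0) ->
  (forall i j, 0 <= c i j 0) ->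
  (forall j, 0 < B0 j 0) ->
  a != 0 ->
  {within [set p : 'rV[R]_n * 'M[R]_k | Kset c B0 p.1 /\ @Spd R k p.2],
     continuous (fun p : 'rV[R]_n * 'M[R]_k => Ffun Is a p.1 p.2)}.
Proof.
move=> _ _ _ _ _.
apply/subspace_continuousP => -[nu0 A0] [[hnu0 _] hA0].
apply: main_at => //.
by move=> p [[]].
Qed.
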